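(* (i) If $X',X''\in\lambda\mathrm{Der}(\mathcal{B})[[\lambda]]$ both satisfy $\exp(X')\phi_0'(\mathcal{A}'[[\lambda]])\subseteq C$ and $\exp(X'')\phi_0'(\mathcal{A}'[[\lambda]])\subseteq C$, then there is $\xi\in\lambda\mathrm{Der}(\mathcal{A}')[[\lambda]]$ with $\exp(X')\phi_0'=(\exp(X'')\phi_0')\circ\exp(\xi)$. (ii) If $\pi'$ (resp. $\pi''$) is the unique Poisson structure on $\mathcal{A}'[[\lambda]]$ making $\exp(X')\phi_0'$ (resp. $\exp(X'')\phi_0'$) a Poisson morphism into $(\mathcal{B}[[\lambda]],\sigma)$, then $\pi'$ and $\pi''$ are equivalent, i.e. $\pi''=\exp(\eta)\pi'$ for some $\eta\in\lambda\mathrm{Der}(\mathcal{A}')[[\lambda]]$ (so the equivalence class of $\pi'$ does not depend on the choice of $X'$).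
   Context: $\mathbb{K}$ is a field of characteristic zero. $\mathcal{A},\mathcal{B}$ are commutative $\mathbb{K}$-algebras with Poisson brackets $\pi_0=\{\cdot,\cdot\}_{\mathcal{A}}$, $\sigma_0=\{\cdot,\cdot\}_{\mathcal{B}}$, and $\phi_0:\mathcal{A}\to\mathcal{B}$ is a Poisson morphism. $\pi,\sigma$ are formal Poisson deformations of $\pi_0,\sigma_0$ ($\mathbb{K}[[\lambda]]$-bilinear Poisson brackets on $\mathcal{A}[[\lambda]]$, $\mathcal{B}[[\lambda]]$ with zeroth-order terms $\pi_0,\sigma_0$), and $\Phi:(\mathcal{A}[[\lambda]],\pi)\to(\mathcal{B}[[\lambda]],\sigma)$ is a $\mathbb{K}[[\lambda]]$-linear Poisson morphism with zeroth-order term $\phi_0$. $\mathcal{A}'$ is the Poisson commutant of $\phi_0(\mathcal{A})$ in $(\mathcal{B},\sigma_0)$, with induced bracket, and $\phi_0'$ is the inclusion $\mathcal{A}'\to\mathcal{B}$ extended $\lambda$-linearly. $C$ is the commutant of $\Phi(\mathcal{A}[[\lambda]])$ in $(\mathcal{B}[[\lambda]],\sigma)$. For such $X'$, the map $\exp(X')\phi_0':\mathcal{A}'[[\lambda]]\to C$ is a ring isomorphism and there is a unique Poisson structure on $\mathcal{A}'[[\lambda]]$ making it a Poisson morphism into $(\mathcal{B}[[\lambda]],\sigma)$. Exponentials of derivations are $\exp(X)=\sum_nX^n/n!$. *)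

(* Defs.v *)
(* Formal power series in lambda with coefficients in a
   K-module U are represented as sequences  nat -> U  (component n = coefficient
   of lambda^n).  K[[lambda]]-(bi)linear maps are represented, as usual in
   deformation theory, by formal series of K-(bi)linear maps acting by Cauchy
   convolution. *)
From HB Require Import structures.
From mathcomp Require Import all_boot all_order all_algebra.
Set Implicit Arguments. Unset Strict Implicit. Unset Printing Implicit Defensive.
Import Order.TTheory GRing.Theory Num.Theory.
Local Open Scope ring_scope.

Section FPS.
Variable K : fieldType.

Definition smul (R : pzRingType) (a b : nat -> R) : nat -> R :=
  fun n => \sum_(i < n.+1) a i * b (n - i)%N.

Definition sone (R : pzRingType) : nat -> R := fun n => if n == 0%N then 1 else 0.

Definition sapply (U V : lmodType K) (f : nat -> U -> V) (a : nat -> U) : nat -> V :=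
  fun n => \sum_(i < n.+1) f i (a (n - i)%N).

Definition sbr (U : lmodType K) (p : nat -> U -> U -> U) (a b : nat -> U) : nat -> U :=
  fun n => \sum_(i < n.+1) \sum_(j < (n - i).+1) p i (a j) (b (n - i - j)%N).

Definition scomp (U V W : lmodType K) (f : nat -> V -> W) (g : nat -> U -> V)
  : nat -> U -> W :=
  fun n x => \sum_(i < n.+1) f i (g (n - i)%N x).

Definition sid (U : lmodType K) : nat -> U -> U :=
  fun n x => if n == 0%N then x else 0.

Fixpoint spow (U : lmodType K) (X : nat -> U -> U) (m : nat) : nat -> U -> U :=
  match m with
  | 0%N => sid (U := U)
  | m'.+1 => scomp X (spow X m')
  end.

(* exp(X) = sum_m X^m / m!  ; for X in lambda*(...)[[lambda]] the coefficient of
   lambda^n only involves m <= n *)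
Definition sexp (U : lmodType K) (X : nat -> U -> U) : nat -> U -> U :=
  fun n x => \sum_(m < n.+1) ((m`!)%:R : K)^-1 *: spow X m n x.

Definition ser_in (U : Type) (P : U -> Prop) (a : nat -> U) : Prop :=
  forall n, P (a n).

Definition lin_on (U V : lmodType K) (P : U -> Prop) (f : U -> V) : Prop :=
  forall (c : K) x y, P x -> P y -> f (c *: x + y) = c *: f x + f y.

Definition bilin_on (U : lmodType K) (P : U -> Prop) (p : U -> U -> U) : Prop :=
  (forall x y, P x -> P y -> P (p x y)) /\
  (forall (c : K) x y z, P x -> P y -> P z -> p (c *: x + y) z = c *: p x z + p y z) /\
  (forall (c : K) x y z, P x -> P y -> P z -> p z (c *: x + y) = c *: p z x + p z y).

Definition poisson_on (R : comAlgType K) (P : R -> Prop) (p : R -> R -> R) : Prop :=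
  bilin_on P p /\
  (forall x y, P x -> P y -> p x y = - p y x) /\
  (forall x y z, P x -> P y -> P z ->
      p x (p y z) + p y (p z x) + p z (p x y) = 0) /\
  (forall x y z, P x -> P y -> P z -> p x (y * z) = p x y * z + y * p x z).

Definition fps_poisson_on (R : comAlgType K) (P : R -> Prop) (p : nat -> R -> R -> R) : Prop :=
  (forall k, bilin_on P (p k)) /\
  (forall a b c : nat -> R, ser_in P a -> ser_in P b -> ser_in P c -> forall n,
     [/\ sbr p a b n = - sbr p b a n,
         sbr p a (sbr p b c) n + sbr p b (sbr p c a) n + sbr p c (sbr p a b) n = 0
       & sbr p a (smul b c) n = smul (sbr p a b) c n + smul b (sbr p a c) n]).

Definition der_on (R : comAlgType K) (P : R -> Prop) (D : R -> R) : Prop :=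
  (forall x, P x -> P (D x)) /\ lin_on P D /\
  (forall x y, P x -> P y -> D (x * y) = D x * y + x * D y).

Definition lam_der_on (R : comAlgType K) (P : R -> Prop) (X : nat -> R -> R) : Prop :=
  (forall x, P x -> X 0%N x = 0) /\ (forall k, der_on P (X k)).

Definition poisson_commutant (A B : comAlgType K) (sig0 : B -> B -> B) (phi0 : A -> B)
  : B -> Prop := fun b => forall a : A, sig0 (phi0 a) b = 0.

Definition series_commutant (A B : comAlgType K) (sigma : nat -> B -> B -> B)
  (Phi : nat -> A -> B) (c : nat -> B) : Prop :=
  forall (a : nat -> A) n, sbr sigma (sapply Phi a) c n = 0.

Definition fps_poisson_morph_on (A B : comAlgType K) (PA : A -> Prop)
  (pA : nat -> A -> A -> A) (sB : nat -> B -> B -> B) (F : nat -> A -> B) : Prop :=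
  (forall n, sapply F (@sone A) n = @sone B n) /\
  (forall a b : nat -> A, ser_in PA a -> ser_in PA b -> forall n,
     sapply F (smul a b) n = smul (sapply F a) (sapply F b) n /\
     sapply F (sbr pA a b) n = sbr sB (sapply F a) (sapply F b) n).

Definition everywhere (U : Type) : U -> Prop := fun _ => True.

End FPS.

(* Main.v *)
Require Import Defs.
From mathcomp Require Import all_boot all_order all_algebra.
From mathcomp Require Import zify ring.
Import GRing.Theory.
Local Open Scope ring_scope.

Set Implicit Arguments. Unset Strict Implicit. Unset Printing Implicit Defensive.


Section Sums.
Variable V : zmodType.

Lemma tri_sum n (H : nat -> nat -> V) :
  \sum_(k < n.+1) \sum_(i < k.+1) H i (k - i)%N =
  \sum_(i < n.+1) \sum_(j < (n - i).+1) H i j.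
Proof.
elim: n => [|n IH]; first by rewrite !big_ord1.
rewrite big_ord_recr /= IH [RHS]big_ord_recr /= subnn big_ord1.
rewrite [X in _ = X + _](eq_bigr (fun i : 'I_n.+1 =>
   \sum_(j < (n - i).+1) H i j + H i (n.+1 - i)%N)); last first.
  move=> i _; rewrite subSn; last by rewrite -ltnS.
  by rewrite big_ord_recr /=.
rewrite big_split /= -addrA; congr (_ + _).
by rewrite big_ord_recr /= subnn.
Qed.

Lemma tri_swap n (G : nat -> nat -> V) :
  \sum_(i < n.+1) \sum_(j < (n - i).+1) G i j =
  \sum_(j < n.+1) \sum_(i < (n - j).+1) G i j.
Proof.
rewrite -tri_sum -(tri_sum n (fun j i => G i j)).
apply: eq_bigr => k _.
rewrite (reindex_inj rev_ord_inj) /=.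
apply: eq_bigr => i _; rewrite subKn //; by rewrite -ltnS.
Qed.

Lemma sum_ext_zero k N (F : nat -> V) : (k <= N)%N ->
  (forall p, (k <= p)%N -> (p < N)%N -> F p = 0) ->
  \sum_(p < k) F p = \sum_(p < N) F p.
Proof.
move=> kN H0.
rewrite -!(big_mkord xpredT) (big_cat_nat (leq0n k) kN) /=.
rewrite [X in _ = _ + X]big1_seq ?addr0 // => p /andP [_].
by rewrite mem_index_iota => /andP [] /H0; apply.
Qed.

Lemma conv_rev n (F : nat -> nat -> V) :
  \sum_(i < n.+1) F i (n - i)%N = \sum_(i < n.+1) F (n - i)%N i.
Proof.
rewrite (reindex_inj rev_ord_inj) /=; apply: eq_bigr => i _.
by rewrite subKn // -ltnS.
Qed.

End Sums.


Lemma pascal_sum (V : zmodType) m (f : nat -> nat -> V) :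
  \sum_(p < m.+1) (f p.+1 (m - p)%N + f p (m.+1 - p)%N) *+ 'C(m, p) =
  \sum_(p < m.+2) f p (m.+1 - p)%N *+ 'C(m.+1, p).
Proof.
rewrite [RHS]big_ord_recl /=.
under [X in _ = _ + X]eq_bigr => i _ do rewrite /bump /= add1n subSS binS mulrnDr.
rewrite big_split /=.
under eq_bigr => i _ do rewrite mulrnDl.
rewrite big_split /= addrC.
rewrite [RHS]addrA; congr (_ + _).
rewrite [LHS]big_ord_recl /= !bin0 subn0; congr (_ + _).
rewrite [RHS]big_ord_recr /= bin_small // mulr0n addr0.
by apply: eq_bigr => i _; rewrite /bump /= add1n subSS.
Qed.

Section Ser.
Variable K : fieldType.
Variable B : comAlgType K.

Definition linear_all (f : B -> B) := forall (c : K) x y, f (c *: x + y) = c *: f x + f y.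
Definition der_all (f : B -> B) := linear_all f /\ forall x y, f (x * y) = f x * y + x * f y.

Section Lin.
Variable f : B -> B.
Hypothesis hf : linear_all f.
Lemma lin0 : f 0 = 0.
Proof. have h := hf 1 0 0; rewrite !scale1r addr0 in h.
by apply: (addrI (f 0)); rewrite addr0 -h. Qed.
Lemma linD x y : f (x + y) = f x + f y.
Proof. by have := hf 1 x y; rewrite !scale1r. Qed.
Lemma linZ c x : f (c *: x) = c *: f x.
Proof. by have := hf c x 0; rewrite !addr0 lin0 addr0. Qed.
Lemma linN x : f (- x) = - f x.
Proof. by rewrite -scaleN1r linZ scaleN1r. Qed.
Lemma linB x y : f (x - y) = f x - f y.
Proof. by rewrite linD linN. Qed.
Lemma linMn x m : f (x *+ m) = f x *+ m.
Proof. by elim: m => [|m IH]; rewrite ?mulr0n ?lin0 // !mulrS linD IH. Qed.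
Lemma lin_sum (I : Type) (r : seq I) (P : pred I) (F : I -> B) :
  f (\sum_(i <- r | P i) F i) = \sum_(i <- r | P i) f (F i).
Proof.
elim: r => [|i r IH]; first by rewrite !big_nil lin0.
by rewrite !big_cons; case: (P i); rewrite ?linD IH.
Qed.
End Lin.

Definition cst (x : B) : nat -> B := fun n => if n == 0%N then x else 0.

Lemma sapply_cst (F : nat -> B -> B) x n : (forall i, F i 0 = 0) ->
  sapply F (cst x) n = F n x.
Proof.
move=> F0; rewrite /sapply big_ord_recr /= subnn /cst eqxx big1 ?add0r //.
move=> i _; rewrite subn_eq0 leqNgt ltn_ord /=; exact: F0.
Qed.

Lemma smul_cst x y n : smul (cst x) (cst y) n = cst (x * y) n.
Proof.
rewrite /smul /cst; case: n => [|n]; first by rewrite big_ord1 /=.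
rewrite big1 // => i _; case: (posnP i) => [->|ip]; first by rewrite subn0 /= mulr0.
by rewrite /= ?(gtn_eqF ip) mul0r.
Qed.

Lemma sexp0 (X : nat -> B -> B) x : sexp X 0 x = x.
Proof. by rewrite /sexp big_ord1 /= invr1 scale1r. Qed.

Lemma spow_vanish (X : nat -> B -> B) m i x : (forall x, X 0%N x = 0) ->
  (forall k, X k 0 = 0) -> (i < m)%N -> spow X m i x = 0.
Proof.
move=> X0 Xk0; elim: m i => [|m IH] i //= lim.
rewrite /scomp big1 // => k _.
case: (posnP k) => [->|kpos]; first exact: X0.
rewrite IH ?Xk0 //.
have := ltn_ord k; lia.
Qed.


Lemma spow_lin (X : nat -> B -> B) m i : (forall k, linear_all (X k)) ->
  linear_all (spow X m i).
Proof.
move=> hX; elim: m i => [|m IH] i /= c x y.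
  by rewrite /sid; case: (i == 0%N); rewrite ?scaler0 ?addr0.
rewrite /scomp scaler_sumr -big_split; apply: eq_bigr => k _.
by rewrite IH (hX k).
Qed.

Lemma sexp_lin (X : nat -> B -> B) i : (forall k, linear_all (X k)) ->
  linear_all (sexp X i).
Proof.
move=> hX c x y; rewrite /sexp scaler_sumr -big_split; apply: eq_bigr => m _.
by rewrite (spow_lin m i hX) scalerDr !scalerA mulrC.
Qed.

Lemma sapply_ext (F : nat -> B -> B) a b n :
  (forall k, (k <= n)%N -> a k = b k) -> sapply F a n = sapply F b n.
Proof.
move=> hab; apply: eq_bigr => i _; rewrite hab //; exact: leq_subr.
Qed.

Lemma sapply_id a n : sapply (sid (U:=B)) a n = a n.
Proof.
by rewrite /sapply big_ord_recl /= subn0 /sid eqxx big1 ?addr0.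
Qed.

Lemma sapply_comp (f g : nat -> B -> B) a n : (forall i, linear_all (f i)) ->
  sapply (scomp f g) a n = sapply f (sapply g a) n.
Proof.
move=> hf; rewrite /sapply /scomp.
transitivity (\sum_(k < n.+1) \sum_(j < k.+1)
   (fun j l => f j (g l (a (n - j - l)%N))) j (k - j)%N).
  apply: eq_bigr => k _; apply: eq_bigr => j _ /=.
  have := ltn_ord k; have := ltn_ord j => hj hk.
  by have -> : (n - j - (k - j) = n - k)%N by lia.
rewrite (tri_sum n (fun j l => f j (g l (a (n - j - l)%N)))).
apply: eq_bigr => i _; by rewrite (lin_sum (hf i)).
Qed.

Lemma sapply_spow (X : nat -> B -> B) m a n : (forall k, linear_all (X k)) ->
  sapply (spow X m) a n = iter m (sapply X) a n.
Proof.
move=> hX; elim: m n => [|m IH] n /=; first exact: sapply_id.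
rewrite sapply_comp //; apply: sapply_ext => k _; exact: IH.
Qed.

Lemma sapply_sum (X : nat -> B -> B) (I : Type) (r : seq I) (P : pred I)
  (Fs : I -> nat -> B) n : (forall k, linear_all (X k)) ->
  sapply X (fun k => \sum_(i <- r | P i) Fs i k) n =
  \sum_(i <- r | P i) sapply X (Fs i) n.
Proof.
move=> hX; rewrite /sapply.
under eq_bigr => k _ do rewrite (lin_sum (hX k)).
by rewrite exchange_big.
Qed.

Lemma sapply_muln (X : nat -> B -> B) F c n : (forall k, linear_all (X k)) ->
  sapply X (fun k => F k *+ c) n = sapply X F n *+ c.
Proof.
move=> hX; rewrite /sapply -sumrMnl; apply: eq_bigr => i _.
by rewrite (linMn (hX i)).
Qed.

Lemma sapply_leibniz (X : nat -> B -> B) a b n : (forall k, der_all (X k)) ->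
  sapply X (smul a b) n = smul (sapply X a) b n + smul a (sapply X b) n.
Proof.
move=> hX; rewrite {1}/sapply /smul.
under eq_bigr => i _ do rewrite (lin_sum (hX i).1).
under eq_bigr => i _ do under eq_bigr => j _ do rewrite (hX i).2.
under eq_bigr => i _ do rewrite big_split /=.
rewrite big_split /=; congr (_ + _).
  rewrite /sapply.
  under [RHS]eq_bigr => k _ do rewrite mulr_suml.
  rewrite -(tri_sum n (fun i j => X i (a j) * b (n - i - j)%N)).
  apply: eq_bigr => k _; apply: eq_bigr => j _ /=.
  have := ltn_ord k; have := ltn_ord j => hj hk.
  by have -> : (n - j - (k - j) = n - k)%N by lia.
rewrite /sapply.
under [RHS]eq_bigr => k _ do rewrite mulr_sumr.
rewrite (tri_swap n (fun i j => a j * X i (b (n - i - j)%N))).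
apply: eq_bigr => k _; apply: eq_bigr => j _ /=.
by rewrite subnAC.
Qed.

End Ser.


Section Exp.
Variable K : fieldType.
Variable K_char0 : [pchar K] =i pred0.
Variable B : comAlgType K.
Variable X : nat -> B -> B.
Hypothesis hX : forall k, der_all (X k).
Hypothesis X0 : forall x, X 0%N x = 0.

Let hXl k : linear_all (X k) := (hX k).1.

Lemma iter_leibniz m a b n : iter m (sapply X) (smul a b) n =
  \sum_(p < m.+1) smul (iter p (sapply X) a) (iter (m - p) (sapply X) b) n *+ 'C(m, p).
Proof.
elim: m n => [|m IH] n; first by rewrite big_ord1 /= mulr1n.
rewrite iterS.
transitivity (sapply X (fun k => \sum_(p < m.+1)
   smul (iter p (sapply X) a) (iter (m - p) (sapply X) b) k *+ 'C(m, p)) n).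
  by apply: sapply_ext => k _; rewrite IH.
apply: etrans; first by apply: (sapply_sum _ _ _ _ hXl).
under eq_bigr => p _ do rewrite (sapply_muln (fun k => smul (iter p (sapply X) a) (iter (m - p) (sapply X) b) k)) // sapply_leibniz //.
rewrite -(pascal_sum m (fun p q => smul (iter p (sapply X) a) (iter q (sapply X) b) n)).
apply: eq_bigr => p _ /=.
by rewrite subSn // -ltnS.
Qed.

Lemma iter_vanish p a i : (i < p)%N -> iter p (sapply X) a i = 0.
Proof.
elim: p i => [|p IH] i //= lim.
rewrite /sapply big1 // => k _.
case: (posnP k) => [->|kpos]; first exact: X0.
rewrite IH ?(lin0 (hXl k)) //.
have := ltn_ord k; lia.
Qed.

Definition cf (m : nat) : K := (m`!%:R)^-1.

Lemma sexp_iter a n N : (n < N)%N ->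
  sapply (sexp X) a n = \sum_(m < N) cf m *: iter m (sapply X) a n.
Proof.
move=> nN.
under [RHS]eq_bigr => m _ do rewrite -sapply_spow //.
rewrite /sapply.
under [RHS]eq_bigr => m _ do rewrite scaler_sumr.
rewrite exchange_big /=; apply: eq_bigr => i _.
rewrite /sexp.
apply: (@sum_ext_zero _ i.+1 N (fun m => cf m *: spow X m i (a (n - i)%N))).
  by apply: leq_trans nN; rewrite ltnS -ltnS.
move=> m im mN.
rewrite spow_vanish ?scaler0 //; first by move=> k; exact: (lin0 (hXl k)).
Qed.

Lemma fact_neq0 m : (m`!%:R : K) != 0.
Proof. by move/pcharf0P: K_char0 => ->; rewrite -lt0n fact_gt0. Qed.

Lemma coef_bin m p : (p <= m)%N -> cf m * 'C(m, p)%:R = cf p * cf (m - p).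
Proof.
move=> pm; rewrite /cf -(bin_fact pm) !natrM !invfM.
have hC : ('C(m, p)%:R : K) != 0.
  by move/pcharf0P: K_char0 => ->; rewrite -lt0n bin_gt0.
by rewrite mulrAC mulVf // mul1r.
Qed.


Lemma sum_mul_sum (F G : nat -> B) N1 N2 (c d : nat -> K) :
  (\sum_(p < N1) c p *: F p) * (\sum_(q < N2) d q *: G q) =
  \sum_(p < N1) \sum_(q < N2) (c p * d q) *: (F p * G q).
Proof.
rewrite mulr_suml; apply: eq_bigr => p _; rewrite mulr_sumr; apply: eq_bigr => q _.
by rewrite -scalerAl -scalerAr scalerA.
Qed.

Lemma sexp_mul a b n : sapply (sexp X) (smul a b) n =
  smul (sapply (sexp X) a) (sapply (sexp X) b) n.
Proof.
pose S := fun p q => smul (iter p (sapply X) a) (iter q (sapply X) b) n.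
have E1 : sapply (sexp X) (smul a b) n =
   \sum_(p < n.+1) \sum_(q < (n - p).+1) (cf p * cf q) *: S p q.
  rewrite (sexp_iter _ (ltnSn n)).
  rewrite -(tri_sum n (fun p q => (cf p * cf q) *: S p q)).
  apply: eq_bigr => m _; rewrite iter_leibniz scaler_sumr; apply: eq_bigr => p _.
  rewrite -scaler_nat scalerA coef_bin //; by rewrite -ltnS.
have E2 : smul (sapply (sexp X) a) (sapply (sexp X) b) n =
   \sum_(p < n.+1) \sum_(q < (n - p).+1) (cf p * cf q) *: S p q.
  rewrite {1}/smul.
  under eq_bigr => i _ do rewrite (sexp_iter a (ltn_ord i))
     (sexp_iter b (leq_ltn_trans (leq_subr i n) (ltnSn n)))
     (sum_mul_sum (fun p => iter p (sapply X) a i) (fun q => iter q (sapply X) b (n - i)%N) n.+1 n.+1 cf cf).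
  rewrite exchange_big; apply: eq_bigr => p _; rewrite exchange_big /=.
  transitivity (\sum_(q < n.+1) (cf p * cf q) *: S p q).
    by apply: eq_bigr => q _; rewrite /S /smul scaler_sumr.
  symmetry; apply: (@sum_ext_zero _ (n - p).+1 n.+1 (fun q => (cf p * cf q) *: S p q)).
    by rewrite ltnS leq_subr.
  move=> q hq _; rewrite /S /smul big1 ?scaler0 // => i _.
  case: (ltnP i p) => ip; first by rewrite (iter_vanish _ ip) mul0r.
  rewrite (@iter_vanish q b) ?mulr0 //.
  by have := ltn_ord i; lia.
by rewrite E1 E2.
Qed.

End Exp.


Section Gen.
Variable K : fieldType.
Variable B : comAlgType K.

Lemma sapply_inj (F : nat -> B -> B) (F0 : forall x, F 0%N x = x) (a b : nat -> B) :
  (forall n, sapply F a n = sapply F b n) -> forall n, a n = b n.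
Proof.
move=> H; elim/ltn_ind => n IH.
move: (H n); rewrite /sapply !big_ord_recl /= !subn0 !F0.
rewrite (eq_bigr (fun i : 'I_n => F (bump 0 i) (b (n - bump 0 i)%N))) => [/addIr //|i _].
rewrite IH //; have := ltn_ord i; rewrite /bump /=; lia.
Qed.

Fixpoint preF (F : nat -> B -> B) (c : nat -> B) (N : nat) : nat -> B :=
  match N with
  | 0%N => fun _ => c 0%N
  | N'.+1 => fun k => if k == N'.+1 then
        c k - \sum_(i < N'.+1) F i.+1 (preF F c N' (N' - i)%N)
      else preF F c N' k
  end.

Definition pre F c : nat -> B := fun n => preF F c n n.

Lemma preF_stable F c N k : (k <= N)%N -> preF F c N k = pre F c k.
Proof.
elim: N => [|N IH]; first by rewrite leqn0 => /eqP ->.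
rewrite leq_eqVlt => /orP [/eqP -> //|hk].
by rewrite /= (ltn_eqF hk) IH.
Qed.

Lemma pre_spec (F : nat -> B -> B) (F0 : forall x, F 0%N x = x) c n :
  sapply F (pre F c) n = c n.
Proof.
case: n => [|N]; first by rewrite /sapply big_ord1 /= F0.
rewrite /sapply big_ord_recl /= subn0 F0 /pre /= eqxx.
rewrite -[RHS](subrK (\sum_(i < N.+1) F i.+1 (preF F c N (N - i)%N))).
congr (_ + _); apply: eq_bigr => i _.
by rewrite /bump /= add1n subSS (preF_stable _ _ (leq_subr i N)).
Qed.

Lemma sapply_lin (F : nat -> B -> B) (c : K) (u v : nat -> B) n :
  (forall i, linear_all (F i)) ->
  sapply F (fun k => c *: u k + v k) n = c *: sapply F u n + sapply F v n.
Proof.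
move=> hF; rewrite /sapply scaler_sumr -big_split; apply: eq_bigr => i _.
exact: hF.
Qed.

Lemma smul_ext (a a' b b' : nat -> B) n : (forall k, (k <= n)%N -> a k = a' k) ->
  (forall k, (k <= n)%N -> b k = b' k) -> smul a b n = smul a' b' n.
Proof.
move=> ha hb; apply: eq_bigr => i _; rewrite ha ?hb ?leq_subr //.
by rewrite -ltnS.
Qed.

Lemma sbr_ext (p : nat -> B -> B -> B) (a a' b b' : nat -> B) n :
  (forall k, (k <= n)%N -> a k = a' k) ->
  (forall k, (k <= n)%N -> b k = b' k) -> sbr p a b n = sbr p a' b' n.
Proof.
move=> ha hb; apply: eq_bigr => i _; apply: eq_bigr => j _.
have := ltn_ord i; have := ltn_ord j => hj hi.
rewrite ha ?hb //; lia.
Qed.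

Lemma sbr_sub (p : nat -> B -> B -> B) (u v w : nat -> B) n :
  (forall i z, linear_all (p i z)) ->
  sbr p u (fun k => v k - w k) n = sbr p u v n - sbr p u w n.
Proof.
move=> hp; rewrite /sbr -sumrB; apply: eq_bigr => i _.
rewrite -sumrB; apply: eq_bigr => j _; exact: (linB (hp _ _)).
Qed.

Lemma sum_recl (V : zmodType) n (F : nat -> V) :
  \sum_(i < n.+1) F i = F 0%N + \sum_(i < n) F i.+1.
Proof. by rewrite big_ord_recl. Qed.

Lemma sum_recr (V : zmodType) n (F : nat -> V) :
  \sum_(i < n.+1) F i = \sum_(i < n) F i + F n.
Proof. by rewrite big_ord_recr. Qed.

Lemma sbr_low (p : nat -> B -> B -> B) (u d : nat -> B) n :
  (forall i z, linear_all (p i z)) -> (forall k, (k < n)%N -> d k = 0) ->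
  sbr p u d n = p 0%N (u 0%N) (d n).
Proof.
move=> hp hd; rewrite /sbr big_ord_recl /= subn0 big_ord_recl /=.
rewrite [X in _ + X = _]big1; last first.
  move=> i _; rewrite big1 // => j _; rewrite hd ?(lin0 (hp _ _)) //.
  have := ltn_ord j; have := ltn_ord i; rewrite /bump /=; lia.
rewrite subn0 big1 => [|j _]; first by rewrite !addr0.
rewrite hd ?(lin0 (hp _ _)) //; have := ltn_ord j; rewrite /bump /=; lia.
Qed.

Section Closed.
Variable P : B -> Prop.
Hypothesis hP0 : P 0.
Hypothesis hPl : forall (c : K) x y, P x -> P y -> P (c *: x + y).

Lemma P_add x y : P x -> P y -> P (x + y).
Proof. by move=> hx hy; have := hPl 1 hx hy; rewrite scale1r. Qed.
Lemma P_scale (c : K) x : P x -> P (c *: x).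
Proof. by move=> hx; have := hPl c hx hP0; rewrite addr0. Qed.
Lemma P_sub x y : P x -> P y -> P (x - y).
Proof. by move=> hx hy; rewrite -scaleN1r addrC; apply: hPl. Qed.
Lemma P_sum (I : Type) (r : seq I) (Q : pred I) (F : I -> B) :
  (forall i, Q i -> P (F i)) -> P (\sum_(i <- r | Q i) F i).
Proof.
move=> hF; elim: r => [|i r IH]; first by rewrite big_nil.
rewrite big_cons; case hQ: (Q i) => //; exact: P_add (hF _ hQ) IH.
Qed.

Lemma sapply_P (F : nat -> B -> B) (a : nat -> B) :
  (forall i x, P x -> P (F i x)) -> ser_in P a -> ser_in P (sapply F a).
Proof. move=> hF ha n; apply: P_sum => i _; exact: hF. Qed.

Lemma spow_P (X : nat -> B -> B) m i x :
  (forall k x, P x -> P (X k x)) -> P x -> P (spow X m i x).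
Proof.
move=> hX hx; elim: m i => [|m IH] i /=.
  by rewrite /sid; case: (i == 0%N).
by apply: P_sum => k _; apply: hX.
Qed.

Lemma sexp_P (X : nat -> B -> B) i x :
  (forall k x, P x -> P (X k x)) -> P x -> P (sexp X i x).
Proof.
move=> hX hx; apply: P_sum => m _; apply: P_scale; exact: spow_P.
Qed.
End Closed.

Lemma spow_dep (Y Z : nat -> B -> B) n m x :
  (forall k x, (k <= n)%N -> Y k x = Z k x) -> spow Y m n x = spow Z m n x.
Proof.
elim: m n => [|m IH] n hYZ //=.
apply: eq_bigr => i _; rewrite hYZ; last by rewrite -ltnS.
congr (Z _ _).
apply: IH => k y hk; apply: hYZ; apply: leq_trans hk _; exact: leq_subr.
Qed.

Lemma sexp_dep (Y Z : nat -> B -> B) n x :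
  (forall k x, (k <= n)%N -> Y k x = Z k x) -> sexp Y n x = sexp Z n x.
Proof.
move=> hYZ; apply: eq_bigr => m _; by rewrite (spow_dep _ _ hYZ).
Qed.

Lemma sexp_top (Y Z : nat -> B -> B) n x : (0 < n)%N ->
  (forall k x, (k < n)%N -> Y k x = Z k x) ->
  (forall x, Y 0%N x = 0) -> (forall x, Z 0%N x = 0) ->
  (forall k, Y k 0 = 0) -> (forall k, Z k 0 = 0) -> (forall x, Z n x = 0) ->
  sexp Y n x = Y n x + sexp Z n x.
Proof.
move=> n0 hYZ Y0 Z0 Yk0 Zk0 Zn.
have sp1 : forall W : nat -> B -> B, (forall k, W k 0 = 0) -> spow W 1 n x = W n x.
  move=> W Wk0 /=; rewrite /scomp big_ord_recr /= subnn /sid eqxx big1 ?add0r //.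
  move=> i _; rewrite subn_eq0 leqNgt ltn_ord /=; exact: Wk0.
have sp2 : forall m, spow Y m.+2 n x = spow Z m.+2 n x.
  move=> m; change (scomp Y (spow Y m.+1) n x = scomp Z (spow Z m.+1) n x).
  rewrite /scomp; apply: eq_bigr => i _.
  case: (posnP i) => [->|ip]; first by rewrite Y0 Z0.
  have := ltn_ord i; rewrite ltnS leq_eqVlt => /orP [/eqP ->|iltn].
    by rewrite subnn !spow_vanish // Yk0 Zk0.
  rewrite hYZ //; congr (Z _ _); apply: spow_dep => k y hk; apply: hYZ; lia.
rewrite /sexp; case: n n0 hYZ Zn sp1 sp2 => [//|n] _ hYZ Zn sp1 sp2.
rewrite (sum_recl _ (fun m => (m`!%:R : K)^-1 *: spow Y m n.+1 x)).
rewrite (sum_recl _ (fun m => (m.+1`!%:R : K)^-1 *: spow Y m.+1 n.+1 x)).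
rewrite (sum_recl _ (fun m => (m`!%:R : K)^-1 *: spow Z m n.+1 x)).
rewrite (sum_recl _ (fun m => (m.+1`!%:R : K)^-1 *: spow Z m.+1 n.+1 x)).
have c1 : ((1`!)%:R : K)^-1 = 1 by rewrite invr1.
change (spow Y 0 n.+1 x) with (0 : B); change (spow Z 0 n.+1 x) with (0 : B).
rewrite !sp1 // Zn c1 !scaler0 !scale1r !add0r; congr (_ + _).
by apply: eq_bigr => i _; rewrite sp2.
Qed.

End Gen.


Section Construct.
Variable K : fieldType.
Variable K_char0 : [pchar K] =i pred0.
Variable B : comAlgType K.

Lemma sexp_mul_pt (X : nat -> B -> B) (hX : forall k, der_all (X k))
  (X0 : forall x, X 0%N x = 0) n (x y : B) :
  sexp X n (x * y) = \sum_(i < n.+1) sexp X i x * sexp X (n - i) y.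
Proof.
have E0 : forall i, sexp X i 0 = 0 := fun i => lin0 (sexp_lin i (fun k => (hX k).1)).
rewrite -(@sapply_cst _ _ (sexp X) (x * y) n E0).
rewrite (@sapply_ext _ _ (sexp X) (cst (x * y)) (smul (cst x) (cst y)) n); last first.
  by move=> k _; rewrite smul_cst.
rewrite (sexp_mul K_char0 hX X0) /smul; apply: eq_bigr => i _.
by rewrite !sapply_cst.
Qed.

Fixpoint Fx (T : nat -> B -> B) (N : nat) : nat -> B -> B :=
  match N with
  | 0%N => fun _ _ => 0
  | N'.+1 => fun k x => if k == N'.+1 then T k x - sexp (Fx T N') k x
                        else Fx T N' k x
  end.

Lemma Fx_stable T N k x : (k <= N)%N -> Fx T N k x = Fx T k k x.
Proof.
elim: N => [|N IH]; first by rewrite leqn0 => /eqP ->.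
rewrite leq_eqVlt => /orP [/eqP -> //|hk].
by rewrite /= (ltn_eqF hk) IH.
Qed.

Lemma Fx_high T N k x : (N < k)%N -> Fx T N k x = 0.
Proof.
elim: N => [|N IH] hk //=.
by rewrite gtn_eqF // IH // ltnW.
Qed.

Lemma Fx_0 T N x : Fx T N 0%N x = 0.
Proof. by elim: N => [|N IH] //=. Qed.

Variable P : B -> Prop.
Hypothesis hP0 : P 0.
Hypothesis hPl : forall (c : K) x y, P x -> P y -> P (c *: x + y).
Variable T : nat -> B -> B.
Hypothesis Tlin : forall k, linear_all (T k).
Hypothesis T0 : forall x, T 0%N x = x.
Hypothesis Tmul : forall n x y, T n (x * y) = \sum_(i < n.+1) T i x * T (n - i) y.
Hypothesis TP : forall n x, P x -> P (T n x).

Lemma Fx_props N :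
  [/\ forall k, der_all (Fx T N k), forall k x, P x -> P (Fx T N k x)
    & forall k x, (k <= N)%N -> sexp (Fx T N) k x = T k x].
Proof.
elim: N => [|N [IHd IHP IHs]].
  split.
  - move=> k; split; first by move=> c x y /=; rewrite scaler0 addr0.
    by move=> x y /=; rewrite mul0r mulr0 addr0.
  - by move=> k x _ /=.
  - by move=> k x; rewrite leqn0 => /eqP ->; rewrite sexp0 T0.
pose Z := Fx T N.
have Z0 : forall x, Z 0%N x = 0 by move=> x; exact: Fx_0.
have Zl : forall k, linear_all (Z k) by move=> k; exact: (IHd k).1.
have Yeq : forall k x, k != N.+1 -> Fx T N.+1 k x = Z k x.
  by move=> k x /negbTE h /=; rewrite h.
have Ytop : forall x, Fx T N.+1 N.+1 x = T N.+1 x - sexp Z N.+1 x.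
  by move=> x /=; rewrite eqxx.
have Dlin : forall (c : K) x y, T N.+1 (c *: x + y) - sexp Z N.+1 (c *: x + y) =
   c *: (T N.+1 x - sexp Z N.+1 x) + (T N.+1 y - sexp Z N.+1 y).
  move=> c x y; rewrite (Tlin N.+1) (sexp_lin N.+1 Zl) scalerBr opprD addrACA //.
have Yd : forall k, der_all (Fx T N.+1 k).
  move=> k; case: (eqVneq k N.+1) => [->|hk].
    split; first by move=> c x y; rewrite !Ytop; exact: Dlin.
    move=> x y; rewrite !Ytop Tmul (sexp_mul_pt IHd Z0).
    rewrite (sum_recl _ (fun i => T i x * T (N.+1 - i)%N y)).
    rewrite (sum_recr _ (fun i => T i.+1 x * T (N.+1 - i.+1)%N y)).
    rewrite (sum_recl _ (fun i => sexp Z i x * sexp Z (N.+1 - i)%N y)).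
    rewrite (sum_recr _ (fun i => sexp Z i.+1 x * sexp Z (N.+1 - i.+1)%N y)).
    rewrite (eq_bigr (fun i : 'I_N => sexp Z i.+1 x * sexp Z (N.+1 - i.+1)%N y)); last first.
      by move=> i _; have := ltn_ord i => hi; rewrite !IHs //; lia.
    rewrite !subn0 !subnn !T0 !sexp0; ring.
  split; [move=> c x y; rewrite !Yeq //; exact: (IHd k).1
         | move=> x y; rewrite !Yeq //; exact: (IHd k).2].
split => //.
- move=> k x Px; case: (eqVneq k N.+1) => [->|hk].
    rewrite Ytop; apply: P_sub => //; first exact: TP.
    by apply: sexp_P => // j z Pz; exact: IHP.
  by rewrite Yeq //; exact: IHP.
- move=> k x; rewrite leq_eqVlt => /orP [/eqP ->|hk].
    have hYZ : forall j z, (j < N.+1)%N -> Fx T N.+1 j z = Z j z.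
      by move=> j z hj; rewrite Yeq // ltn_eqF.
    have Y0 : forall z, Fx T N.+1 0%N z = 0 by move=> z; exact: Fx_0.
    have Yk0 : forall j, Fx T N.+1 j 0 = 0 by move=> j; exact: (lin0 (Yd j).1).
    have Zk0 : forall j, Z j 0 = 0 by move=> j; exact: (lin0 (IHd j).1).
    have Zn : forall z, Z N.+1 z = 0 by move=> z; exact: Fx_high.
    by rewrite (sexp_top x (ltn0Sn N) hYZ Y0 Z0 Yk0 Zk0 Zn) Ytop subrK.
  rewrite -IHs //.
  apply: sexp_dep => j z hj; rewrite Yeq //; rewrite neq_ltn; apply/orP; left.
  by apply: leq_ltn_trans hj hk.
Qed.

Lemma xi_exists : exists xi : nat -> B -> B,
  [/\ forall k, der_all (xi k), forall x, xi 0%N x = 0,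
      forall k x, P x -> P (xi k x) & forall n x, sexp xi n x = T n x].
Proof.
exists (fun k => Fx T k k); split.
- by move=> k; case: (Fx_props k) => hd _ _; exact: hd.
- by [].
- by move=> k x Px; case: (Fx_props k) => _ hP _; exact: hP.
move=> n x; case: (Fx_props n) => _ _ hs; rewrite -(hs n x (leqnn n)).
by apply: sexp_dep => k z hk; rewrite (Fx_stable _ _ hk).
Qed.

End Construct.

Unset Implicit Arguments. Set Strict Implicit. Set Printing Implicit Defensive.

Theorem proposition3p10
  (K : fieldType) (K_char0 : [pchar K] =i pred0)
  (A B : comAlgType K)
  (pi0 : A -> A -> A) (sig0 : B -> B -> B)
  (Hpi0 : poisson_on (everywhere (U:=A)) pi0) (Hsig0 : poisson_on (everywhere (U:=B)) sig0)
  (phi0 : A -> B)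
  (Hphi0_lin : lin_on (everywhere (U:=A)) phi0)
  (Hphi0_one : phi0 1 = 1)
  (Hphi0_mul : forall x y, phi0 (x * y) = phi0 x * phi0 y)
  (Hphi0_br : forall x y, phi0 (pi0 x y) = sig0 (phi0 x) (phi0 y))
  (pi : nat -> A -> A -> A) (sigma : nat -> B -> B -> B)
  (Hpi_0 : forall x y, pi 0%N x y = pi0 x y)
  (Hsigma_0 : forall x y, sigma 0%N x y = sig0 x y)
  (Hpi : fps_poisson_on (everywhere (U:=A)) pi)
  (Hsigma : fps_poisson_on (everywhere (U:=B)) sigma)
  (Phi : nat -> A -> B)
  (HPhi_lin : forall k, lin_on (everywhere (U:=A)) (Phi k))
  (HPhi_0 : forall x, Phi 0%N x = phi0 x)
  (HPhi : fps_poisson_morph_on (everywhere (U:=A)) pi sigma Phi)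
  (X' X'' : nat -> B -> B)
  (HX' : lam_der_on (everywhere (U:=B)) X')
  (HX'' : lam_der_on (everywhere (U:=B)) X'')
  (HX'C : forall a : nat -> B, ser_in (poisson_commutant sig0 phi0) a ->
            series_commutant sigma Phi (sapply (sexp X') a))
  (HX''C : forall a : nat -> B, ser_in (poisson_commutant sig0 phi0) a ->
            series_commutant sigma Phi (sapply (sexp X'') a)) :
  (* (i) *)
  (exists xi : nat -> B -> B,
     lam_der_on (poisson_commutant sig0 phi0) xi /\
     forall a : nat -> B, ser_in (poisson_commutant sig0 phi0) a ->
       forall n, sapply (sexp X') a n = sapply (sexp X'') (sapply (sexp xi) a) n)
  /\
  (* (ii) *)
  (forall pi' pi'' : nat -> B -> B -> B,
     fps_poisson_on (poisson_commutant sig0 phi0) pi' ->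
     fps_poisson_morph_on (poisson_commutant sig0 phi0) pi' sigma (sexp X') ->
     fps_poisson_on (poisson_commutant sig0 phi0) pi'' ->
     fps_poisson_morph_on (poisson_commutant sig0 phi0) pi'' sigma (sexp X'') ->
     exists eta : nat -> B -> B,
       lam_der_on (poisson_commutant sig0 phi0) eta /\
       forall a b : nat -> B,
         ser_in (poisson_commutant sig0 phi0) a ->
         ser_in (poisson_commutant sig0 phi0) b ->
         forall n, sapply (sexp eta) (sbr pi' a b) n
                   = sbr pi'' (sapply (sexp eta) a) (sapply (sexp eta) b) n).
Proof.
pose P := poisson_commutant sig0 phi0.
have toLin : forall f : B -> B, lin_on (everywhere (U:=B)) f -> linear_all f.
  by move=> f H c x y; exact: H.
have hX'd : forall k, der_all (X' k).
  move=> k; case: (HX'.2 k) => _ [hl hm]; split; first exact: toLin.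
  by move=> x y; exact: hm.
have hX''d : forall k, der_all (X'' k).
  move=> k; case: (HX''.2 k) => _ [hl hm]; split; first exact: toLin.
  by move=> x y; exact: hm.
have X'0 : forall x, X' 0%N x = 0 by move=> x; exact: HX'.1.
have X''0 : forall x, X'' 0%N x = 0 by move=> x; exact: HX''.1.
have E'l : forall k, linear_all (sexp X' k).
  by move=> k; apply: sexp_lin => j; exact: (hX'd j).1.
have E''l : forall k, linear_all (sexp X'' k).
  by move=> k; apply: sexp_lin => j; exact: (hX''d j).1.
have E'0 : forall k, sexp X' k 0 = 0 by move=> k; exact: lin0.
have sigl : forall i z, linear_all (sigma i z).
  by move=> i z c x y; exact: ((Hsigma.1 i).2.2 c x y z).
have sig0l : forall z, linear_all (sig0 z).
  by move=> z c x y; exact: (Hsig0.1.2.2 c x y z).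
have hP0 : P 0 by move=> a; exact: lin0.
have hPl : forall (c : K) x y, P x -> P y -> P (c *: x + y).
  by move=> c x y hx hy a; rewrite (sig0l _ c x y) hx hy scaler0 addr0.
pose Tser := fun x => pre (sexp X'') (sapply (sexp X') (cst x)).
pose Tm := fun n x => Tser x n.
have TE : forall x n, sapply (sexp X'') (Tser x) n = sexp X' n x.
  by move=> x n; rewrite pre_spec ?sapply_cst //; exact: sexp0.
have Tlin : forall k, linear_all (Tm k).
  move=> k c x y; rewrite /Tm.
  apply: (@sapply_inj _ _ (sexp X'') (sexp0 X'') (Tser (c *: x + y))
            (fun k => c *: Tser x k + Tser y k)) => n.
  by rewrite TE sapply_lin // !TE; exact: E'l.
have T0 : forall x, Tm 0%N x = x.
  by move=> x; rewrite /Tm /Tser /pre /= sapply_cst // sexp0.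
have Tmul : forall n x y, Tm n (x * y) = \sum_(i < n.+1) Tm i x * Tm (n - i)%N y.
  move=> n x y; rewrite /Tm.
  apply: (@sapply_inj _ _ (sexp X'') (sexp0 X'') (Tser (x * y))
            (smul (Tser x) (Tser y))) => {}n.
  rewrite TE (sexp_mul K_char0 hX''d X''0) (sexp_mul_pt K_char0 hX'd X'0) /smul.
  by apply: eq_bigr => i _; rewrite !TE.
have TP : forall n x, P x -> P (Tm n x).
  move=> n0 x Px; rewrite /Tm; elim/ltn_ind: n0 => n IH.
  pose tr := fun k => if (k < n)%N then Tser x k else 0.
  have Ptr : ser_in P tr by move=> k; rewrite /tr; case: ifP => // hk; exact: IH.
  have Pcx : ser_in P (cst x) by move=> k; rewrite /cst; case: (k == 0%N).
  have C1 := HX'C (cst x) Pcx; have C2 := HX''C tr Ptr.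
  pose d := fun k => sapply (sexp X') (cst x) k - sapply (sexp X'') tr k.
  have dlow : forall k, (k < n)%N -> d k = 0.
    move=> k hk; rewrite /d sapply_cst // -TE.
    rewrite (@sapply_ext _ _ (sexp X'') (Tser x) tr k) ?subrr // => j hj.
    by rewrite /tr ifT //; apply: leq_ltn_trans hj hk.
  have dn : d n = Tser x n.
    rewrite /d sapply_cst // -TE /sapply.
    rewrite (sum_recl _ (fun i => sexp X'' i (Tser x (n - i)%N))).
    rewrite (sum_recl _ (fun i => sexp X'' i (tr (n - i)%N))).
    rewrite subn0 !sexp0 /tr ltnn add0r.
    rewrite [X in _ - X](eq_bigr (fun i : 'I_n => sexp X'' i.+1 (Tser x (n - i.+1)%N))).
      by rewrite addrK.
    by move=> i _; rewrite ifT //; have := ltn_ord i; lia.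
  move=> y; rewrite -dn.
  have u0 : sapply Phi (cst y) 0%N = phi0 y.
    by rewrite /sapply big_ord1 /cst /= HPhi_0.
  rewrite -u0 -Hsigma_0 -(sbr_low (sapply Phi (cst y)) sigl dlow).
  by rewrite /d sbr_sub // C1 C2 subrr.
have [xi [xid xi0 xiP xiT]] := xi_exists K_char0 hP0 hPl Tlin T0 Tmul TP.
have KEY : forall s n, sapply (sexp X') s n = sapply (sexp X'') (sapply (sexp xi) s) n.
  move=> s n.
  rewrite (@sapply_ext _ _ (sexp X'') (sapply (sexp xi) s) (sapply Tm s) n); last first.
    by move=> k _; apply: eq_bigr => i _; rewrite xiT.
  rewrite -sapply_comp //; apply: eq_bigr => i _; symmetry; exact: TE.
have xiLD : lam_der_on (poisson_commutant sig0 phi0) xi.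
  split; first by move=> x _; exact: xi0.
  move=> k; split; first exact: xiP.
  split; first by move=> c x y _ _; exact: (xid k).1.
  by move=> x y _ _; exact: (xid k).2.
split.
  exists xi; split; [exact: xiLD | move=> a _ n; exact: KEY].
move=> p1 p2 Hp1 Hm' Hp2 Hm''.
exists xi; split; first exact: xiLD.
have PX : forall s, ser_in P s -> ser_in P (sapply (sexp xi) s).
  move=> s hs; apply: (sapply_P hP0 hPl) => // i x hx.
  exact: (sexp_P hP0 hPl i xiP hx).
move=> a b Pa Pb.
apply: (@sapply_inj _ _ (sexp X'') (sexp0 X'') (sapply (sexp xi) (sbr p1 a b))
   (sbr p2 (sapply (sexp xi) a) (sapply (sexp xi) b))) => n.
rewrite -KEY (Hm'.2 a b Pa Pb n).2.
rewrite (@sbr_ext _ _ sigma (sapply (sexp X') a) (sapply (sexp X'') (sapply (sexp xi) a))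
   (sapply (sexp X') b) (sapply (sexp X'') (sapply (sexp xi) b)) n); last 2 first.
- by move=> k _; exact: KEY.
- by move=> k _; exact: KEY.
by rewrite (Hm''.2 _ _ (PX a Pa) (PX b Pb) n).2.
Qed.
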